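(* Let $q\ge2$, let $U_1,\dots,U_q\in U(q)$ be arbitrary and let $D=\sum_{j=1}^q|j\rangle\langle j|\otimes U_j$ (the block-diagonal unitary $\bigoplus_j U_j$). Then $SD$ and $DS$ are dual-unitary, and $$\mathcal{M}_+^{DS}(a)_{jk}=\frac1q\operatorname{tr}(U_j^\dagger U_k)\,a_{jk}\quad(1\le j,k\le q),\qquad \mathcal{M}_+^{SD}(a)=\frac1q\sum_{j=1}^q U_j^\dagger a\,U_j .$$ In particular the eigenvalues of $\mathcal{M}_+^{DS}$ are the $q^2$ numbers $\frac1q\operatorname{tr}(U_j^\dagger U_k)$, $1\le j,k\le q$; at least $q$ of them equal $1$, and if the $U_j$ are pairwise orthogonal in the Hilbert–Schmidt inner product then all the others are $0$.
   Context: Product basis $|i\alpha\rangle$ of $\mathbb{C}^q\otimes\mathbb{C}^q$; realignment $\langle\beta\alpha|X^{R_1}|ji\rangle=\langle i\alpha|X|j\beta\rangle$; a unitary $U$ is dual-unitary if $U^{R_1}$ is unitary. $S$ is the swap operator. For unitary $U$, $\mathcal{M}_+^U(a)=\frac1q\operatorname{tr}_1[U^\dagger(a\otimes I)U]$ for $q\times q$ matrices $a$, where $\operatorname{tr}_1$ is the partial trace over the first factor. *)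

(* Defs.v *)
(* Complex scalars: an arbitrary numClosedFieldType C
   (e.g. algC, or complex R for a real closed field R). *)
From HB Require Import structures.
From mathcomp Require Import all_boot all_order all_algebra.
From mathcomp Require Import sesquilinear spectral.
Set Implicit Arguments. Unset Strict Implicit. Unset Printing Implicit Defensive.
Import Order.TTheory GRing.Theory Num.Theory.
Local Open Scope ring_scope.
Local Open Scope sesquilinear_scope.

Section Defs.
Variables (C : numClosedFieldType) (q : nat).

(* product basis vector |i alpha> of C^q (x) C^q : index i*q + alpha *)
Definition kidx (i a : 'I_q) : 'I_(q * q) := mxvec_index i a.

Definition realign (X : 'M[C]_(q * q)) : 'M[C]_(q * q) :=
  \sum_(i < q) \sum_(a < q) \sum_(j < q) \sum_(b < q)
     X (kidx i a) (kidx j b) *: delta_mx (kidx b a) (kidx j i).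

Definition dual_unitary (U : 'M[C]_(q * q)) : Prop :=
  U \is unitarymx /\ realign U \is unitarymx.

Definition swapmx : 'M[C]_(q * q) :=
  \sum_(i < q) \sum_(a < q) delta_mx (kidx a i) (kidx i a).

Definition tens_id (x : 'M[C]_q) : 'M[C]_(q * q) :=
  \sum_(i < q) \sum_(j < q) \sum_(a < q) x i j *: delta_mx (kidx i a) (kidx j a).

Definition ptrace1 (X : 'M[C]_(q * q)) : 'M[C]_q :=
  \matrix_(a < q, b < q) \sum_(i < q) X (kidx i a) (kidx i b).

Definition Mplus (U : 'M[C]_(q * q)) (x : 'M[C]_q) : 'M[C]_q :=
  q%:R^-1 *: ptrace1 (U ^t* *m tens_id x *m U).

Definition blockdiag (Us : 'I_q -> 'M[C]_q) : 'M[C]_(q * q) :=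
  \sum_(j < q) \sum_(a < q) \sum_(b < q)
     Us j a b *: delta_mx (kidx j a) (kidx j b).

End Defs.

(* Main.v *)
Require Import Defs.
From HB Require Import structures.
From mathcomp Require Import all_boot all_order all_algebra.
From mathcomp Require Import sesquilinear spectral.
Import Order.TTheory GRing.Theory Num.Theory.
Local Open Scope ring_scope.
Local Open Scope sesquilinear_scope.
Section S.
Variables (C : numClosedFieldType) (q : nat).
Lemma kidx_eq (i a j b : 'I_q) : (kidx i a == kidx j b) = (i == j) && (a == b).
Proof.
rewrite /kidx /mxvec_index (inj_eq (@cast_ord_inj _ _ _)) (inj_eq enum_rank_inj).
by rewrite xpair_eqE.
Qed.
Lemma sum_kidx (F : 'I_(q*q) -> C) : \sum_k F k = \sum_i \sum_a F (kidx i a).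
Proof.
rewrite (reindex _ (curry_mxvec_bij _ _)) /= pair_big /=.
by apply: eq_bigr => -[i a].
Qed.
Lemma collapse (T : finType) (F : T -> C) j :
  (forall i, i != j -> F i = 0) -> \sum_i F i = F j.
Proof. by move=> H; rewrite (bigD1 j) //= big1 ?addr0. Qed.
Arguments collapse {T F}.
Lemma delta_kidx (i a j b u v w z : 'I_q) :
  (delta_mx (kidx i a) (kidx j b) : 'M[C]_(q*q)) (kidx u v) (kidx w z)
  = ((u == i) && (v == a) && (w == j) && (z == b))%:R.
Proof. by rewrite mxE !kidx_eq !andbA. Qed.

Lemma nsym (x y : 'I_q) : x != y -> (y == x) = false.
Proof. by rewrite eq_sym => /negbTE. Qed.
Arguments nsym {x y}.
Ltac kill := let x := fresh "x" in let hx := fresh "hx" in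
  move=> x hx; repeat (apply: big1 => ? _);
  rewrite ?(negbTE hx) ?(nsym hx) /= ?andbF ?andFb ?mulr0 ?mul0r ?conjC0 ?mulr0 ?mul0r ?scale0r //.

Lemma summx2E n (F : 'I_q -> 'I_q -> 'M[C]_n) u v :
  (\sum_i \sum_j F i j) u v = \sum_i \sum_j F i j u v.
Proof. rewrite summxE; apply: eq_bigr => i _; by rewrite summxE. Qed.
Lemma summx3E n (F : 'I_q -> 'I_q -> 'I_q -> 'M[C]_n) u v :
  (\sum_i \sum_j \sum_k F i j k) u v = \sum_i \sum_j \sum_k F i j k u v.
Proof. rewrite summxE; apply: eq_bigr => i _; by rewrite summx2E. Qed.
Lemma summx4E n (F : 'I_q -> 'I_q -> 'I_q -> 'I_q -> 'M[C]_n) u v :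
  (\sum_i \sum_j \sum_k \sum_l F i j k l) u v = \sum_i \sum_j \sum_k \sum_l F i j k l u v.
Proof. rewrite summxE; apply: eq_bigr => i _; by rewrite summx3E. Qed.

Lemma blockdiagE (Us : 'I_q -> 'M[C]_q) i a j b :
  blockdiag Us (kidx i a) (kidx j b) = (i == j)%:R * Us i a b.
Proof.
rewrite /blockdiag summx3E.
under eq_bigr => ? _ do under eq_bigr => ? _ do under eq_bigr => ? _ do
  rewrite mxE delta_kidx.
have [eij|nij] := eqVneq i j; first subst j.
  rewrite (collapse i); last by kill.
  rewrite (collapse a); last by kill.
  rewrite (collapse b); last by kill.
  by rewrite !eqxx mulr1 mul1r.
rewrite mul0r; apply: big1 => x _; apply: big1 => y _; apply: big1 => z _.
case: (i =P x) => [exi|_]; last by rewrite /= mulr0.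
by subst x; rewrite (nsym nij) /= ?andbF mulr0.
Qed.

Lemma cnat (n : nat) : Num.conj (n%:R : C) = n%:R.
Proof. exact: conjC_nat. Qed.

Ltac col v := rewrite (collapse v); last by kill.

Lemma swapE (i a j b : 'I_q) :
  swapmx C q (kidx i a) (kidx j b) = ((j == a) && (b == i))%:R.
Proof.
rewrite /swapmx summx2E.
under eq_bigr => ? _ do under eq_bigr => ? _ do rewrite delta_kidx.
by col a; col i; rewrite !eqxx.
Qed.

Lemma tensE (x : 'M[C]_q) (i a j b : 'I_q) :
  tens_id x (kidx i a) (kidx j b) = x i j * (b == a)%:R.
Proof.
rewrite /tens_id summx3E.
under eq_bigr => ? _ do under eq_bigr => ? _ do under eq_bigr => ? _ do
  rewrite mxE delta_kidx.
by col i; col j; col a; rewrite !eqxx.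
Qed.

Lemma realignE (X : 'M[C]_(q*q)) (i a j b : 'I_q) :
  realign X (kidx b a) (kidx j i) = X (kidx i a) (kidx j b).
Proof.
rewrite /realign summx4E.
under eq_bigr => ? _ do under eq_bigr => ? _ do under eq_bigr => ? _ do
  under eq_bigr => ? _ do rewrite mxE delta_kidx.
by col i; col a; col j; col b; rewrite !eqxx mulr1.
Qed.

Lemma mulmxE (A B : 'M[C]_(q*q)) (i a j b : 'I_q) :
  (A *m B) (kidx i a) (kidx j b) =
  \sum_e \sum_f A (kidx i a) (kidx e f) * B (kidx e f) (kidx j b).
Proof. by rewrite mxE sum_kidx. Qed.

Lemma DSE (Us : 'I_q -> 'M[C]_q) (m c n d : 'I_q) :
  (blockdiag Us *m swapmx C q) (kidx m c) (kidx n d) = (d == m)%:R * Us m c n.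
Proof.
rewrite mulmxE.
under eq_bigr => ? _ do under eq_bigr => ? _ do rewrite blockdiagE swapE.
col m; col n; rewrite !eqxx mul1r.
by case: (d == m); rewrite /= ?mulr1 ?mulr0 ?mul1r ?mul0r.
Qed.

Lemma SDE (Us : 'I_q -> 'M[C]_q) (m c n d : 'I_q) :
  (swapmx C q *m blockdiag Us) (kidx m c) (kidx n d) = (c == n)%:R * Us c m d.
Proof.
rewrite mulmxE.
under eq_bigr => ? _ do under eq_bigr => ? _ do rewrite blockdiagE swapE.
by col c; col m; rewrite !eqxx /= mul1r.
Qed.

Lemma MplusE (U : 'M[C]_(q*q)) (x : 'M[C]_q) (al be : 'I_q) : Mplus U x al be = q%:R^-1 * \sum_i \sum_n \sum_d
   (\sum_m \sum_c (U (kidx m c) (kidx i al))^* * tens_id x (kidx m c) (kidx n d))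
     * U (kidx n d) (kidx i be).
Proof.
rewrite /Mplus /ptrace1 !mxE; congr (_ * _); apply: eq_bigr => i _.
rewrite mulmxE; apply: eq_bigr => n _; apply: eq_bigr => d _.
rewrite mulmxE; congr (_ * _); apply: eq_bigr => m _; apply: eq_bigr => c _.
by rewrite !mxE.
Qed.

Lemma Mplus_DS (Us : 'I_q -> 'M[C]_q) (x : 'M[C]_q) (al be : 'I_q) :
  Mplus (blockdiag Us *m swapmx C q) x al be
  = q%:R^-1 * \tr (Us al ^t* *m Us be) * x al be.
Proof.
rewrite MplusE.
transitivity (q%:R^-1 * \sum_i \sum_d (Us al d i)^* * x al be * Us be d i).
  congr (_ * _); apply: eq_bigr => i _.
  transitivity (\sum_n \sum_d (Us al d i)^* * x al n * ((be == n)%:R * Us n d i)).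
    apply: eq_bigr => n _; apply: eq_bigr => d _; congr (_ * _); last by rewrite DSE.
    under eq_bigr => ? _ do under eq_bigr => ? _ do rewrite DSE tensE.
    by col al; col d; rewrite !eqxx mul1r mulr1.
  by col be; apply: eq_bigr => d _; rewrite eqxx mul1r.
rewrite -mulrA; congr (_ * _); rewrite /mxtrace mulr_suml; apply: eq_bigr => i _.
rewrite !mxE mulr_suml; apply: eq_bigr => d _; rewrite !mxE.
by rewrite mulrAC.
Qed.

Lemma Mplus_SD (Us : 'I_q -> 'M[C]_q) (x : 'M[C]_q) :
  Mplus (swapmx C q *m blockdiag Us) x
  = q%:R^-1 *: (\sum_(j < q) (Us j ^t* *m x *m Us j)).
Proof.
apply/matrixP => al be; rewrite MplusE mxE; congr (_ * _); rewrite summxE.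
apply: eq_bigr => i _.
transitivity (\sum_n \sum_d ((d == i)%:R * \sum_m (Us i m al)^* * x m n)
                              * ((d == i)%:R * Us d n be)).
  apply: eq_bigr => n _; apply: eq_bigr => d _; congr (_ * _); last by rewrite SDE.
  rewrite mulr_sumr; apply: eq_bigr => m _.
  under eq_bigr => ? _ do rewrite SDE tensE.
  by col i; rewrite eqxx mul1r mulrA mulrC.
rewrite mxE; apply: eq_bigr => n _; col i; rewrite eqxx !mul1r mxE.
by congr (_ * _); apply: eq_bigr => m _; rewrite !mxE.
Qed.

Lemma swap_unitary : swapmx C q \is unitarymx.
Proof.
apply/unitarymxP/matrixP => u v.
case/mxvec_indexP: u => i a; case/mxvec_indexP: v => j b.
rewrite mulmxE.
under eq_bigr => ? _ do under eq_bigr => ? _ do rewrite !mxE !swapE.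
col a; col i; rewrite !mxE kidx_eq !eqxx mul1r cnat.
by rewrite andbC.
Qed.

Lemma bd_unitary (Vs : 'I_q -> 'M[C]_q) :
  (forall j, Vs j \is unitarymx) -> blockdiag Vs \is unitarymx.
Proof.
move=> hV; apply/unitarymxP/matrixP => u v.
case/mxvec_indexP: u => i a; case/mxvec_indexP: v => j b.
rewrite mulmxE.
under eq_bigr => ? _ do under eq_bigr => ? _ do rewrite !mxE !blockdiagE.
col i; rewrite !mxE kidx_eq eqxx.
case: (j =P i) => [eji|nji].
  subst j; rewrite eqxx /=.
  have := hV i => /unitarymxP /matrixP /(_ a b); rewrite !mxE => <-.
  by apply: eq_bigr => f _; rewrite !mxE !mul1r.
rewrite /=; have -> : (i == j) = false by apply/eqP => h; apply: nji.
by apply: big1 => f _; rewrite mul0r conjC0 mulr0.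
Qed.

Lemma realign_SD (Us : 'I_q -> 'M[C]_q) :
  realign (swapmx C q *m blockdiag Us)
  = swapmx C q *m blockdiag (fun a => (Us a)^T).
Proof.
apply/matrixP => u v.
case/mxvec_indexP: u => b a; case/mxvec_indexP: v => j i.
rewrite realignE SDE mulmxE.
under eq_bigr => ? _ do under eq_bigr => ? _ do rewrite swapE blockdiagE.
by col a; col b; rewrite !eqxx mxE mul1r.
Qed.

Lemma realign_DS (Us : 'I_q -> 'M[C]_q) :
  realign (blockdiag Us *m swapmx C q) = blockdiag Us *m swapmx C q.
Proof.
apply/matrixP => u v.
case/mxvec_indexP: u => b a; case/mxvec_indexP: v => j i.
rewrite realignE DSE mulmxE.
under eq_bigr => ? _ do under eq_bigr => ? _ do rewrite swapE blockdiagE.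
col b; col j; rewrite !eqxx /= mul1r.
case: (b =P i) => [ebi|nbi]; first by subst b; rewrite eqxx mul1r mulr1.
have -> : (i == b) = false by apply/eqP => h; apply: nbi.
by rewrite mul0r mulr0.
Qed.

Lemma big_kidx (R : Type) (idx : R) (op : Monoid.com_law idx) (F : 'I_(q*q) -> R) :
  \big[op/idx]_k F k = \big[op/idx]_i \big[op/idx]_a F (kidx i a).
Proof.
rewrite (reindex _ (curry_mxvec_bij _ _)) /= pair_big /=.
by apply: eq_bigr => -[i a].
Qed.

Lemma linE (f : 'M[C]_q -> 'M[C]_q) (j k j' k' : 'I_q) :
  lin_mx f (kidx j k) (kidx j' k') = f (delta_mx j k) j' k'.
Proof. by rewrite /lin_mx /lin1_mx mxE /= /kidx vec_mx_delta mxvecE. Qed.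
End S.

Theorem mainTheorem6 (C : numClosedFieldType) (q : nat) (hq : (2 <= q)%N)
  (Us : 'I_q -> 'M[C]_q) (hU : forall j, Us j \is unitarymx) :
  let D := blockdiag Us in
  let S := swapmx C q in
  let lam := fun j k : 'I_q => q%:R^-1 * \tr (Us j ^t* *m Us k) in
  [/\ dual_unitary (S *m D), dual_unitary (D *m S),
      (forall (a : 'M[C]_q) (j k : 'I_q),
          Mplus (D *m S) a j k = lam j k * a j k),
      (forall a : 'M[C]_q,
          Mplus (S *m D) a = q%:R^-1 *: (\sum_(j < q) (Us j ^t* *m a *m Us j)))
    & [/\ char_poly (lin_mx (Mplus (D *m S))) =
          \prod_(j < q) \prod_(k < q) ('X - (lam j k)%:P),
        (q <= #|[set p : 'I_q * 'I_q | lam p.1 p.2 == 1%R]|)%N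
      & ((forall j k : 'I_q, j != k -> \tr (Us j ^t* *m Us k) = 0) ->
        forall j k : 'I_q, j != k -> lam j k = 0)]].
Proof.
move=> D S lam.
have hDS : forall a j k, Mplus (D *m S) a j k = lam j k * a j k.
  by move=> a j k; rewrite /D /S /lam Mplus_DS.
split.
- split; first by apply: mul_unitarymx; [exact: swap_unitary | exact: bd_unitary].
  rewrite /S /D realign_SD; apply: mul_unitarymx; first exact: swap_unitary.
  by apply: bd_unitary => a; rewrite trmx_unitary.
- split; first by apply: mul_unitarymx; [exact: bd_unitary | exact: swap_unitary].
  rewrite /S /D realign_DS; apply: mul_unitarymx; first exact: bd_unitary.
  exact: swap_unitary.
- exact: hDS.
- by move=> a; rewrite /S /D Mplus_SD.
split.
- rewrite char_poly_trig; last first.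
    apply/is_trig_mxP => u v ltuv.
    have : u != v by rewrite neq_ltn ltuv.
    case/mxvec_indexP: u ltuv => j k _; case/mxvec_indexP: v => j' k' neq.
    rewrite linE hDS mxE.
    have [ej|nj] := eqVneq j' j; last by rewrite /= mulr0.
    have [ek|nk] := eqVneq k' k; last by rewrite andbF mulr0.
    by subst; rewrite eqxx in neq.
  rewrite big_kidx; apply: eq_bigr => j _; apply: eq_bigr => k _.
  by rewrite linE hDS mxE !eqxx mulr1.
- have hq0 : q%:R != 0 :> C by rewrite pnatr_eq0; by case: (q) hq.
  have lam1 : forall j, lam j j = 1.
    move=> j; rewrite /lam.
    have := mulmxKtV (1%:M : 'M[C]_q) (hU j) erefl; rewrite mul1mx => ->.
    by rewrite mxtrace1 mulVf.
  apply: (@leq_trans #|[set (j, j) | j : 'I_q]|).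
    by rewrite card_imset ?card_ord // => x y [].
  apply: subset_leq_card; apply/subsetP => p /imsetP [j _ ->].
  by rewrite inE /= lam1.
- by move=> H j k njk; rewrite /lam H // mulr0.
Qed.
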